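(* In the poset $\textsf{Star}(n)$: the identity permutation $(1)(2)\cdots(n)$ is the unique maximal element; the minimal elements are exactly the $n$-cycles, so there are $(n-1)!$ of them; and $\textsf{Star}(n)$ is graded, every maximal chain having exactly $n$ elements.
   Context: $\mathfrak{S}_n$ is the symmetric group on $[n]$, products taken right to left; cycles include fixed points. For a pivot $k\in[n]$, a star factorization of $\pi$ is $\pi=g_1\cdots g_r$ with each $g_i$ a transposition $(k\ i)$, $i\neq k$; it is transitive if all $(k\ i)$, $i\in[n]\setminus\{k\}$, occur; $\star_k(\pi)$ is the set of transitive star factorizations of $\pi$ of minimum length $n+m-2$ ($m$ = number of cycles of $\pi$). $\sigma\preceq_k\pi$ means some $\gamma\in\star_k(\sigma)$ is a not necessarily contiguous subword of some $\delta\in\star_k(\pi)$. This relation does not depend on $k$; it is denoted $\preceq$, and $\textsf{Star}(n)$ is the resulting poset on $\mathfrak{S}_n$. *)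

(* Defs.v *)
From mathcomp Require Import all_boot all_order all_fingroup.
Set Implicit Arguments. Unset Strict Implicit. Unset Printing Implicit Defensive.

(* A star word with pivot k is a list of indices [i1; ...; ir]; it denotes the
   sequence of transpositions g_j = (k i_j).  Words are compared as sequences of
   indices (equivalent to comparing transposition words, since i <> k). *)

(* Product g1 g2 ... gr taken right to left, i.e. the permutation
   x |-> g1 (g2 ( ... (gr x))).  MathComp's (s * t) x = t (s x), so this is
   the MathComp product of the reversed list. *)
Definition star_prod n (k : 'I_n) (w : seq 'I_n) : 'S_n :=
  (\prod_(i <- rev w) tperm k i)%g.

(* number of cycles of pi, fixed points included *)
Definition ncycles n (p : 'S_n) : nat := #|porbits p|.

Definition trans_star_fact n (k : 'I_n) (p : 'S_n) (w : seq 'I_n) : bool :=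
  [&& all (fun i => i != k) w,
      [forall i : 'I_n, (i != k) ==> (i \in w)] &
      star_prod k w == p].

Definition in_star n (k : 'I_n) (p : 'S_n) (w : seq 'I_n) : bool :=
  trans_star_fact k p w && (size w == n + ncycles p - 2).

Definition star_le n (k : 'I_n) (s p : 'S_n) : Prop :=
  exists g d, [/\ in_star k s g, in_star k p d & subseq g d].

Definition star_maximal n (k : 'I_n) (p : 'S_n) : Prop :=
  forall s, star_le k p s -> s = p.

Definition star_minimal n (k : 'I_n) (p : 'S_n) : Prop :=
  forall s, star_le k s p -> s = p.

Definition is_ncycle n (p : 'S_n) : bool :=
  [exists x, porbit p x == [set: 'I_n]].

Definition star_chain n (k : 'I_n) (C : {set 'S_n}) : Prop :=
  forall s p, s \in C -> p \in C -> star_le k s p \/ star_le k p s.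

Definition star_maximal_chain n (k : 'I_n) (C : {set 'S_n}) : Prop :=
  star_chain k C /\ forall D : {set 'S_n}, star_chain k D -> C \subset D -> D = C.

(* Main.v *)
Require Import Defs.
From mathcomp Require Import all_boot all_order all_fingroup zify.
Set Implicit Arguments. Unset Strict Implicit. Unset Printing Implicit Defensive.

Notation cyc a := #|porbits a|.

Definition Pw n (k : 'I_n) (w : seq 'I_n) : 'S_n := (\prod_(i <- w) tperm k i)%g.

Lemma Pw_cons n (k : 'I_n) z w : Pw k (z :: w) = (tperm k z * Pw k w)%g.
Proof. by rewrite /Pw big_cons. Qed.

Lemma Pw_cat n (k : 'I_n) u v : Pw k (u ++ v) = (Pw k u * Pw k v)%g.
Proof. by rewrite /Pw big_cat. Qed.

Lemma star_prodE n (k : 'I_n) w : star_prod k w = (Pw k w)^-1%g.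
Proof.
elim: w => [|z w IH]; first by rewrite /star_prod /Pw !big_nil invg1.
rewrite /star_prod rev_cons -cats1 big_cat big_seq1 /= -/(star_prod k w) IH.
by rewrite Pw_cons invMg tpermV.
Qed.

Lemma cyc_step n (b : 'S_n) x y : x != y -> x \in porbit b y ->
  cyc (tperm x y * b)%g = (cyc b).+1.
Proof. move=> xy xb; have := porbits_mul_tperm b x y; rewrite xb xy /=; lia. Qed.

Lemma cyc_le n (b : 'S_n) x y : cyc (tperm x y * b)%g <= (cyc b).+1.
Proof. have := porbits_mul_tperm b x y; case: (x != y); case: (x \in _) => /=; lia. Qed.

Lemma cyc_split n (b : 'S_n) x y : (cyc b).+1 <= cyc (tperm x y * b)%g ->
  (x != y) && (x \in porbit b y).
Proof. have := porbits_mul_tperm b x y; case: (x != y); case: (x \in _) => /=; lia. Qed.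

Lemma cyc_merge n (b : 'S_n) x y : x \notin porbit b y ->
  (cyc (tperm x y * b)%g).+1 = cyc b.
Proof.
move=> xb; have xy : x != y by apply: contraNneq xb => ->; apply: porbit_id.
have := porbits_mul_tperm b x y; rewrite xb xy /=; lia.
Qed.

Lemma cycV n (a : 'S_n) : cyc (a^-1)%g = cyc a.
Proof. by rewrite porbitsV. Qed.

Lemma cyc_gt0 n (k : 'I_n) (a : 'S_n) : 0 < cyc a.
Proof. by apply/card_gt0P; exists (porbit a k); apply: imset_f. Qed.

Lemma cyc_leq n (a : 'S_n) : cyc a <= n.
Proof. by rewrite (leq_trans (leq_imset_card _ _)) // card_ord. Qed.

Lemma porbit1 n (x : 'I_n) : porbit 1%g x = [set x].
Proof.
apply/setP=> y; rewrite inE; apply/porbitP/eqP => [[i ->]|->].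
  by rewrite expg1n perm1.
by exists 0; rewrite expg0 perm1.
Qed.

Lemma cyc1 n : cyc (1%g : 'S_n) = n.
Proof.
rewrite /porbits card_imset ?card_ord // => x y.
by rewrite !porbit1 => /set1_inj.
Qed.

Inductive Up n (a : 'S_n) : 'S_n -> Prop :=
| Up0 : Up a a
| UpS b x y : Up a b -> x != y -> x \in porbit b y -> Up a (tperm x y * b)%g.

Lemma Up_trans n (a b c : 'S_n) : Up a b -> Up b c -> Up a c.
Proof. move=> Hab; elim=> // d x y _ IH xy xd; exact: UpS. Qed.

Lemma Up_cyc n (a b : 'S_n) : Up a b -> a = b \/ cyc a < cyc b.
Proof.
elim=> [|c x y _ IH xy xc]; first by left.
right; rewrite cyc_step //; case: IH => [->|]; lia.
Qed.

Lemma Up_last n (a b : 'S_n) : Up a b -> a <> b ->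
  exists b', [/\ Up a b', Up b' b & cyc b = (cyc b').+1].
Proof.
case=> [//|c x y H xy xc] _; exists c; split => //.
  by apply: UpS => //; apply: Up0.
by rewrite cyc_step.
Qed.

Lemma Pw_split n (k : 'I_n) (g : seq 'I_n) x : x != k -> x \in g ->
  exists u v, g = u ++ v /\ Pw k u x = k.
Proof.
move=> xk; elim: g => [//|z g IH]; rewrite inE; case: eqP => [<- _ | zx /= xg].
  by exists [:: x], g; split => //; rewrite Pw_cons /Pw big_nil mulg1 tpermR.
have [u [v [-> Hu]]] := IH xg.
exists (z :: u), v; split => //; rewrite Pw_cons permM tpermD //.
  by rewrite eq_sym.
by apply/eqP => zx'; apply: zx.
Qed.

Definition trans n (k : 'I_n) (g : seq 'I_n) := forall i, i != k -> i \in g.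

Lemma insertion n (k : 'I_n) (g : seq 'I_n) x y :
  all (fun i => i != k) g -> trans k g -> x != y ->
  exists d, [/\ subseq g d, size d = (size g).+1, all (fun i => i != k) d
          & Pw k d = (tperm x y * Pw k g)%g].
Proof.
move=> Hall Htr xy.
have [u [v [Hg Hu]]] : exists u v, g = u ++ v /\ (Pw k u x = k \/ Pw k u y = k).
have [->|xk] := eqVneq x k.
  by exists [::], g; split => //; left; rewrite /Pw big_nil perm1.
have [u [v [Hg Hu]]] := Pw_split xk (Htr x xk).
by exists u, v; split => //; left.
  wlog Hx : x y xy Hu / Pw k u x = k.
    move=> W; case: Hu => Hu; first exact: (W x y xy (or_introl Hu) Hu).
    by rewrite tpermC; apply: (W y x _ (or_introl Hu) Hu); rewrite eq_sym.
  pose z := Pw k u y.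
  have zk : z != k.
    apply/eqP => H; have : Pw k u y = Pw k u x by rewrite [LHS]H Hx.
    by move/perm_inj => yx; rewrite yx eqxx in xy.
  exists (u ++ z :: v); split.
  - by rewrite Hg cat_subseq ?subseq_refl ?subseq_cons.
  - by rewrite Hg !size_cat /=; lia.
  - by move: Hall; rewrite Hg !all_cat /= zk.
  rewrite Hg Pw_cat Pw_cons Pw_cat mulgA mulgA; congr (_ * _)%g.
  have -> : tperm k z = tperm (Pw k u x) (Pw k u y) by rewrite Hx.
  by rewrite -tpermJ /conjg !mulgA mulgV mul1g.
Qed.

Definition tp n (ts : seq ('I_n * 'I_n)) : 'S_n := (\prod_(t <- ts) tperm t.1 t.2)%g.

Lemma tp_conj n (s : 'S_n) ts :
  tp [seq (s t.1, s t.2) | t <- ts] = (tp ts ^ s)%g.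
Proof.
elim: ts => [|t ts IH]; first by rewrite /tp !big_nil conj1g.
by rewrite /tp /= !big_cons -/(tp _) IH conjMg tpermJ.
Qed.

Lemma deletion n (k : 'I_n) (g d : seq 'I_n) : subseq g d ->
  exists ts, Pw k d = (tp ts * Pw k g)%g /\ size d = size g + size ts.
Proof.
elim: d g => [|z d IH] g.
  by rewrite subseq0 => /eqP ->; exists [::]; rewrite /tp big_nil mul1g.
case: g => [|x g] /=.
  move=> _; have [ts [E S]] := IH [::] (sub0seq d).
  exists ((k, z) :: ts); rewrite /tp big_cons -/(tp _) Pw_cons E mulgA; split => //.
  by rewrite /= S.
case: eqP => [->|_] H.
  have [ts [E S]] := IH g H.
  exists [seq (tperm k z t.1, tperm k z t.2) | t <- ts]; split; last by rewrite size_map /= S.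
  rewrite tp_conj !Pw_cons E /conjg tpermV !mulgA.
  by rewrite -[(tperm k z * _ * tperm k z * tperm k z)%g]mulgA tperm2 mulg1.
have [ts [E S]] := IH (x :: g) H.
exists ((k, z) :: ts); rewrite /tp big_cons -/(tp _) Pw_cons E mulgA; split => //.
by rewrite /= S /=; lia.
Qed.

Lemma tp_le n (ts : seq ('I_n * 'I_n)) a : cyc (tp ts * a)%g <= cyc a + size ts.
Proof.
elim: ts => [|t ts IH]; first by rewrite /tp big_nil mul1g addn0.
rewrite /tp big_cons -/(tp _) -mulgA.
by apply: leq_trans (cyc_le _ _ _) _; rewrite /= addnS ltnS.
Qed.

Lemma tp_Up n (ts : seq ('I_n * 'I_n)) a : cyc a + size ts <= cyc (tp ts * a)%g ->
  Up a (tp ts * a)%g.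
Proof.
elim: ts => [|t ts IH]; first by rewrite /tp big_nil mul1g => _; apply: Up0.
rewrite /tp big_cons -/(tp _) -mulgA => H.
have H1 := cyc_le (tp ts * a)%g t.1 t.2.
have H2 := tp_le ts a.
have /andP[xy xb] : (t.1 != t.2) && (t.1 \in porbit (tp ts * a)%g t.2).
  by apply: cyc_split; apply: leq_trans H; rewrite /= addnS ltnS.
apply: UpS => //; apply: IH; rewrite -ltnS -addnS; exact: leq_trans H H1.
Qed.

Lemma Pw_nil n (k : 'I_n) : Pw k [::] = 1%g.
Proof. by rewrite /Pw big_nil. Qed.

Lemma Pw_consE n (k : 'I_n) z w x : Pw k (z :: w) x = Pw k w (tperm k z x).
Proof. by rewrite Pw_cons permM. Qed.

Lemma Pw_fix n (k : 'I_n) w x : x != k -> x \notin w -> Pw k w x = x.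
Proof.
move=> xk; elim: w => [|z w IH]; first by rewrite Pw_nil perm1.
rewrite inE negb_or => /andP[xz xw]; rewrite Pw_consE tpermD ?IH //.
  by rewrite eq_sym.
by rewrite eq_sym.
Qed.

Lemma Pw_nth n (k : 'I_n) w i : uniq (k :: w) -> i < size w ->
  Pw k w (nth k (k :: w) i) = nth k w i.
Proof.
elim: w i => [//|z w IH] i /= /andP[]; rewrite inE negb_or => /andP[kz kw] /andP[zw uw].
have ukw : uniq (k :: w) by rewrite /= kw.
case: i => [|[|j]] /= Hi.
- by rewrite Pw_consE tpermL Pw_fix // eq_sym.
- rewrite Pw_consE tpermR; have := IH 0 ukw; rewrite /=; apply; lia.
- have Hj : j < size w by lia.
  have xw : nth k w j \in w by apply: mem_nth.
  rewrite Pw_consE tpermD.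
  + by have := IH j.+1 ukw; rewrite /=; apply; lia.
  + by apply: contraTneq xw => <-.
  + by apply: contraTneq xw => <-.
Qed.

Lemma Pw_last n (k : 'I_n) w : uniq (k :: w) -> Pw k w (last k w) = k.
Proof.
elim: w => [|z w IH] /=; first by rewrite Pw_nil perm1.
rewrite inE negb_or => /andP[/andP[kz kw] /andP[zw uw]].
case: w IH kw zw uw => [|y w] IH kw zw uw.
  by rewrite Pw_consE /= tpermR Pw_nil perm1.
have hl : last z (y :: w) = last k (y :: w) by [].
have xw : last k (y :: w) \in y :: w by rewrite /= mem_last.
rewrite hl Pw_consE tpermD.
- by apply: IH; rewrite /= kw.
- by apply: contraTneq xw => <-.
- by apply: contraTneq xw => <-.
Qed.

Lemma Pw_iter n (k : 'I_n) w i : uniq (k :: w) -> i <= size w ->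
  iter i (Pw k w) k = nth k (k :: w) i.
Proof.
move=> u; elim: i => [//|i IH] Hi.
by rewrite iterS IH ?Pw_nth //; lia.
Qed.

Lemma ncycle_word n (k : 'I_n) (b : 'S_n) : porbit b k = setT ->
  uniq (k :: traject b (b k) n.-1) /\ Pw k (traject b (b k) n.-1) = b.
Proof.
move=> Hb.
have Hc : #|porbit b k| = n by rewrite Hb cardsT card_ord.
have n0 : 0 < n by apply: leq_ltn_trans (ltn_ord k).
have Htr : k :: traject b (b k) n.-1 = traject b k n by rewrite -trajectS prednK.
have U : uniq (k :: traject b (b k) n.-1).
  by rewrite Htr; have := uniq_traject_porbit b k; rewrite Hc.
split => //; apply/permP => x.
have := porbit_traject b k x; rewrite Hc Hb inE => /esym.
move=> E; have : x \in traject b k n by rewrite E.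
case/trajectP => i Hi ->.
have Hn : nth k (k :: traject b (b k) n.-1) i = iter i b k by rewrite Htr nth_traject.
have Sz : size (traject b (b k) n.-1) = n.-1 by rewrite size_traject.
case: (ltnP i n.-1) => Hi'.
- rewrite -Hn Pw_nth ?Sz // (set_nth_default (b k)) ?Sz // nth_traject //.
  by rewrite Hn -iterSr iterS.
- have Ei : i = n.-1 by lia.
  have Ex : iter i b k = last k (traject b (b k) n.-1).
    by rewrite (last_nth k) Sz -Hn Ei.
  rewrite {1}Ex Pw_last // -iterS Ei prednK //.
  by have := iter_porbit b k; rewrite Hc.
Qed.

Lemma word_ncycle n (k : 'I_n) w : uniq (k :: w) -> size w = n.-1 ->
  porbit (Pw k w) k = setT.
Proof.
move=> U S; apply/setP => x; rewrite inE.
have n0 : 0 < n by apply: leq_ltn_trans (ltn_ord k).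
have xw : x \in k :: w.
  apply/negPn/negP => xn.
  have Ux : uniq (x :: k :: w) by rewrite cons_uniq xn.
  move/card_uniqP: Ux => C.
  have := max_card (mem (x :: k :: w)); rewrite C card_ord /= S; lia.
have Hi : index x (k :: w) <= size w.
  by move: (index_mem x (k :: w)); rewrite xw /= ltnS => ->.
rewrite -(nth_index k xw) -Pw_iter // -permX; exact: mem_porbit.
Qed.

Lemma word_recover n (k : 'I_n) w : uniq (k :: w) ->
  w = traject (Pw k w) (Pw k w k) (size w).
Proof.
move=> U; apply: (@eq_from_nth _ k); first by rewrite size_traject.
move=> i Hi; rewrite [RHS](set_nth_default (Pw k w k)) ?size_traject // nth_traject //.
rewrite -iterSr Pw_iter //.
Qed.

Lemma cyc1_porbit n (k : 'I_n) (b : 'S_n) : cyc b = 1 -> porbit b k = setT.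
Proof.
move/eqP/cards1P => [O HO]; apply/setP => x; rewrite inE.
have Hx : porbit b x \in porbits b by apply: imset_f.
have Hk : porbit b k \in porbits b by apply: imset_f.
rewrite HO !inE in Hx Hk; rewrite (eqP Hk) -(eqP Hx); exact: porbit_id.
Qed.

Lemma exists_merge n (k : 'I_n) (a : 'S_n) : 1 < cyc a -> exists x y, x \notin porbit a y.
Proof.
move=> H; case: (boolP [exists x, exists y, x \notin porbit a y]).
  by move/existsP=> [x /existsP [y Hy]]; exists x, y.
rewrite negb_exists => /forallP Hall.
suff : cyc a <= 1 by lia.
have : porbits a \subset [set porbit a k].
  apply/subsetP => O /imsetP [x _ ->]; rewrite inE; apply/eqP.
  apply/eqP; rewrite eq_porbit_mem.
  by move: (Hall x); rewrite negb_exists => /forallP /(_ k); rewrite negbK.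
by move/subset_leq_card; rewrite cards1.
Qed.

Lemma Up_cycle n (k : 'I_n) (a : 'S_n) : exists b, cyc b = 1 /\ Up b a.
Proof.
have [m Hm] := ubnP (cyc a); elim: m a Hm => [//|m IH] a Hm.
case: (ltnP 1 (cyc a)) => H.
  have [x [y Hxy]] := exists_merge k H.
  set b := (tperm x y * a)%g.
  have Hb := cyc_merge Hxy; rewrite -/b in Hb.
  have [b0 [Hb0 Up0b]] := IH b ltac:(lia).
  exists b0; split => //; apply: Up_trans Up0b _.
  have -> : a = (tperm x y * b)%g by rewrite /b mulgA tperm2 mul1g.
  have /andP[xy xb] : (x != y) && (x \in porbit b y).
    by apply: cyc_split; rewrite /b mulgA tperm2 mul1g -Hb.
  by apply: UpS => //; apply: Up0.
exists a; split; last by apply: Up0.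
by have := cyc_gt0 k a; lia.
Qed.

Lemma extend n (k : 'I_n) (a b : 'S_n) : Up a b -> forall g,
  all (fun i => i != k) g -> trans k g -> Pw k g = a ->
  exists d, [/\ subseq g d, all (fun i => i != k) d, Pw k d = b
              & size d + cyc a = size g + cyc b].
Proof.
elim=> [|c x y _ IH xy xc] g Hall Htr Hg; first by exists g; split.
have [d [Hs Ha Hd Sz]] := IH g Hall Htr Hg.
have Htd : trans k d by move=> i /Htr ig; exact: (mem_subseq Hs).
have [d' [Hs' Sz' Ha' Hd']] := insertion Ha Htd xy.
exists d'; split => //; first exact: subseq_trans Hs Hs'.
  by rewrite Hd' Hd.
by rewrite cyc_step // Sz' addSn Sz addnS.
Qed.

Lemma uniq_cover n (k : 'I_n) w : uniq (k :: w) -> size w = n.-1 ->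
  forall x, x \in k :: w.
Proof.
move=> U S x; have n0 : 0 < n by apply: leq_ltn_trans (ltn_ord k).
apply/negPn/negP => xn.
have Ux : uniq (x :: k :: w) by rewrite cons_uniq xn.
move/card_uniqP: Ux => C.
have := max_card (mem (x :: k :: w)); rewrite C card_ord /= S; lia.
Qed.

Lemma star_word n (k : 'I_n) (a : 'S_n) : exists g,
  [/\ all (fun i => i != k) g, trans k g, Pw k g = a & size g = n + cyc a - 2].
Proof.
have [b [Hb Ub]] := Up_cycle k a.
have [U P] := ncycle_word (cyc1_porbit k Hb).
set g := traject b (b k) n.-1 in U P.
have n0 : 0 < n by apply: leq_ltn_trans (ltn_ord k).
have Ag : all (fun i => i != k) g.
  by apply/allP => i ig; move: U; rewrite cons_uniq => /andP[kg _]; apply: contraNneq kg => <-.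
have Tg : trans k g.
  move=> i ik; have := uniq_cover U; rewrite size_traject => /(_ erefl i).
  by rewrite inE (negbTE ik).
have [d [Hs Ha Hd Sz]] := extend Ub Ag Tg P.
exists d; split => //.
  by move=> i /Tg ig; exact: (mem_subseq Hs).
move: Sz; rewrite Hb size_traject; lia.
Qed.

Lemma in_starP n (k : 'I_n) (p : 'S_n) w : in_star k p w <->
  [/\ all (fun i => i != k) w, trans k w, Pw k w = p^-1%g & size w = n + cyc p - 2].
Proof.
rewrite /in_star /trans_star_fact star_prodE; split.
  move=> /andP [H1 /eqP Hs]; move: H1 => /and3P [Ha /forallP Ht /eqP Hp]; split => //.
  - by move=> i ik; move: (Ht i); rewrite ik.
  - by rewrite -Hp invgK.
move=> [Ha Ht Hp Hs]; rewrite Ha Hp invgK eqxx Hs eqxx /= andbT.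
by rewrite andbT; apply/forallP => i; apply/implyP => /Ht.
Qed.

Lemma le_Up n (k : 'I_n) (s p : 'S_n) : star_le k s p -> Up s^-1%g p^-1%g.
Proof.
move=> [g [d [/in_starP [Ag Tg Pg Sg] /in_starP [Ad Td Pd Sd] Hsub]]].
have [ts [E S]] := deletion k Hsub.
rewrite -Pd E Pg; apply: tp_Up.
have -> : (tp ts * s^-1)%g = p^-1%g by rewrite -Pd E Pg.
rewrite !cycV.
have n0 : 0 < n by apply: leq_ltn_trans (ltn_ord k).
have c1 := cyc_gt0 k s; have c2 := cyc_gt0 k p.
move: Sg Sd S c1 c2; set cs := cyc s; set cp := cyc p; lia.
Qed.

Lemma Up_le n (k : 'I_n) (s p : 'S_n) : Up s^-1%g p^-1%g -> star_le k s p.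
Proof.
move=> U.
have [g [Ag Tg Pg Sg]] := star_word k s^-1%g.
have [d [Hs Ad Pd Sz]] := extend U Ag Tg Pg.
exists g, d; split => //; apply/in_starP; split => //.
- by rewrite -cycV.
- by move=> i /Tg ig; exact: (mem_subseq Hs).
have n0 : 0 < n by apply: leq_ltn_trans (ltn_ord k).
have c1 := cyc_gt0 k s; have c2 := cyc_gt0 k p.
move: Sg Sz c1 c2; rewrite !cycV; set cs := cyc s; set cp := cyc p; set sg := size g; set sd := size d; lia.
Qed.

Lemma nc_cyc n (p : 'S_n) : ncycles p = cyc p. Proof. by []. Qed.

Lemma le_refl n (k : 'I_n) (s : 'S_n) : star_le k s s.
Proof. by apply: Up_le; apply: Up0. Qed.

Lemma le_trans n (k : 'I_n) (s p q : 'S_n) : star_le k s p -> star_le k p q -> star_le k s q.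
Proof. by move=> /le_Up H1 /le_Up H2; apply: Up_le; apply: Up_trans H1 H2. Qed.

Lemma le_rank n (k : 'I_n) (s p : 'S_n) : star_le k s p -> s = p \/ cyc s < cyc p.
Proof.
move/le_Up/Up_cyc; rewrite !cycV => -[E|]; last by right.
by left; rewrite -[s]invgK E invgK.
Qed.

Lemma Up_to1 n (a : 'S_n) : Up a 1%g.
Proof.
have [m Hm] := ubnP (n - cyc a); elim: m a Hm => [//|m IH] a Hm.
case: (eqVneq a 1%g) => [->|na]; first exact: Up0.
have [x ax] : exists x, a x != x.
  apply/existsP; apply: contraNT na => /existsPn H.
  by apply/eqP/permP => x; rewrite perm1; apply/eqP; move: (H x); rewrite negbK.
have xy : x != a x by rewrite eq_sym.
have xa : x \in porbit a (a x).
  by rewrite porbit_sym; have := mem_porbit a 1 x; rewrite expg1.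
have Hc := cyc_step xy xa; have Hle := cyc_leq (tperm x (a x) * a)%g.
apply: (@Up_trans _ _ (tperm x (a x) * a)%g).
  by apply: UpS => //; apply: Up0.
apply: IH; move: Hm Hle; rewrite Hc; set c := cyc a; lia.
Qed.

Lemma le_top n (k : 'I_n) (s : 'S_n) : star_le k s 1%g.
Proof. by apply: Up_le; rewrite invg1; apply: Up_to1. Qed.

Lemma le_down n (k : 'I_n) (p : 'S_n) : 1 < cyc p ->
  exists s, star_le k s p /\ cyc p = (cyc s).+1.
Proof.
rewrite -cycV => H.
have [x [y Hxy]] := exists_merge k H.
set b := (tperm x y * p^-1)%g.
have Hb := cyc_merge Hxy; rewrite -/b in Hb.
exists b^-1%g; split; last by rewrite -Hb porbitsV.
apply: Up_le; rewrite invgK.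
have -> : p^-1%g = (tperm x y * b)%g by rewrite /b mulgA tperm2 mul1g.
have /andP[xy xb] : (x != y) && (x \in porbit b y).
  by apply: cyc_split; rewrite /b mulgA tperm2 mul1g -Hb.
by apply: UpS => //; apply: Up0.
Qed.

Lemma le_last n (k : 'I_n) (s p : 'S_n) : star_le k s p -> s <> p ->
  exists t, [/\ star_le k s t, star_le k t p & cyc p = (cyc t).+1].
Proof.
move=> /le_Up U sp.
have [|b' [U1 U2 E]] := Up_last U.
  by move=> E; apply: sp; rewrite -[s]invgK E invgK.
exists b'^-1%g; split.
- by apply: Up_le; rewrite invgK.
- by apply: Up_le; rewrite invgK.
by rewrite cycV -E cycV.
Qed.

Lemma ncycle_cyc n (p : 'S_n) : is_ncycle p -> cyc p = 1.
Proof.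
move=> /existsP [x /eqP Hx].
apply/eqP; rewrite eqn_leq card_gt0 andbC; apply/andP; split.
  by apply/set0Pn; exists (porbit p x); apply: imset_f.
have : porbits p \subset [set porbit p x].
  apply/subsetP => O /imsetP [y _ ->]; rewrite inE; apply/eqP/eqP.
  by rewrite eq_porbit_mem Hx inE.
by move/subset_leq_card; rewrite cards1.
Qed.

Lemma count_ncycles n (k : 'I_n) : #|[set p : 'S_n | is_ncycle p]| = (n.-1)`!.
Proof.
have n0 : 0 < n by apply: leq_ltn_trans (ltn_ord k).
pose S := [set t : n.-1.-tuple 'I_n | all (predC1 k) t & uniq t].
pose f := fun t : n.-1.-tuple 'I_n => ((Pw k t)^-1)%g.
have US : forall t, t \in S -> uniq (k :: t).
  move=> t; rewrite inE => /andP [Ha Hu]; rewrite cons_uniq Hu andbT.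
  by apply/negP => /(allP Ha); rewrite /= eqxx.
have -> : [set p : 'S_n | is_ncycle p] = f @: S.
  apply/setP => p; rewrite inE; apply/idP/imsetP.
    move=> /existsP [x /eqP Hx].
    have Hk : porbit p^-1%g k = setT.
      rewrite porbitV; apply/eqP; rewrite -Hx eq_porbit_mem Hx inE //.
    have [U P] := ncycle_word Hk.
    have Hsz : size (traject p^-1%g (p^-1%g k) n.-1) == n.-1 by rewrite size_traject.
    exists (Tuple Hsz).
      rewrite inE /=; move: U; rewrite cons_uniq => /andP [kn ->]; rewrite andbT.
      by apply/allP => i ii; apply/eqP => E; move: ii; rewrite E => ii; rewrite ii in kn.
    by rewrite /f /= P invgK.
  move=> [t tS ->]; apply/existsP; exists k; apply/eqP.
  by rewrite /f porbitV word_ncycle ?US // size_tuple.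
rewrite card_in_imset.
  by rewrite card_uniq_tuples cardC1 card_ord ffactnn.
move=> t1 t2 H1 H2 /invg_inj E; apply: val_inj => /=.
have e1 := word_recover (US _ H1); have e2 := word_recover (US _ H2).
by rewrite e1 e2 E !size_tuple.
Qed.

Theorem mainTheorem12 (n : nat) (k : 'I_n) :
  [/\ star_maximal k (1%g : 'S_n),
      (forall p : 'S_n, star_maximal k p -> p = 1%g),
      (forall p : 'S_n, star_minimal k p <-> is_ncycle p),
      #|[set p : 'S_n | is_ncycle p]| = (n.-1)`! &
      (forall C : {set 'S_n}, star_maximal_chain k C -> #|C| = n)].
Proof.
have n0 : 0 < n by apply: leq_ltn_trans (ltn_ord k).
split.
- move=> s /le_rank [->//|]; rewrite cyc1; have := cyc_leq s; lia.
- by move=> p Hp; apply/esym/Hp/le_top.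
- move=> p; split.
    move=> Hmin; case: (ltnP 1 (cyc p)) => H.
      have [s [Hs E]] := le_down k H.
      by have := Hmin s Hs => Es; rewrite Es in E; lia.
    have H1 : cyc p = 1 by have := cyc_gt0 k p; lia.
    by apply/existsP; exists k; apply/eqP; apply: cyc1_porbit.
  move=> /ncycle_cyc H1 s /le_rank [//|]; rewrite H1; have := cyc_gt0 k s; lia.
- exact: count_ncycles.
move=> C [Hch Hmax].
have Hadd : forall t, (forall z, z \in C -> star_le k z t \/ star_le k t z) -> t \in C.
  move=> t Ht.
  have HD : star_chain k (t |: C).
    move=> s p; rewrite !inE => /orP [/eqP -> | sC] /orP [/eqP -> | pC].
    - by left; apply: le_refl.
    - by case: (Ht p pC) => H; [right | left].
    - exact: Ht.
    - exact: Hch.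
  by rewrite -(Hmax _ HD (subsetUr _ _)) setU11.
have one_in : (1%g : 'S_n) \in C by apply: Hadd => z _; left; apply: le_top.
have down : forall x, x \in C -> 1 < cyc x -> exists2 t, t \in C & cyc x = (cyc t).+1.
  move=> x xC Hx.
  pose L := [set z in C | cyc z < cyc x].
  case: (set_0Vmem L) => [L0 | [y0 y0L]].
    have [s [Hs E]] := le_down k Hx.
    exists s => //; apply: Hadd => z zC.
    case: (Hch z x zC xC) => H.
      case: (le_rank H) => [->|lt]; first by right.
      have zL : z \in L by rewrite inE zC lt.
      by rewrite L0 inE in zL.
    by right; apply: le_trans Hs H.
  case: (@arg_maxnP _ y0 (mem L) (fun z => cyc z) y0L) => y yL ymax.
  have yL' : y \in L := yL.
  move: yL'; rewrite inE => /andP [yC yx].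
  have Hyx : star_le k y x.
    case: (Hch y x yC xC) => // H; case: (le_rank H) => [E|]; first by rewrite E in yx; lia.
    lia.
  have [|t [H1 H2 E]] := le_last Hyx; first by move=> E; rewrite E in yx; lia.
  exists t => //; apply: Hadd => z zC.
  case: (ltnP (cyc z) (cyc x)) => Hz.
    have zL : z \in L by rewrite inE zC Hz.
    have := ymax z zL => zy.
    case: (Hch z y zC yC) => H.
      by left; apply: le_trans H H1.
    case: (le_rank H) => [<-|]; first by left.
    lia.
  case: (Hch z x zC xC) => H.
    case: (le_rank H) => [->|]; first by right.
    lia.
  by right; apply: le_trans H2 H.
have ranks : forall j, j < n -> exists2 x, x \in C & cyc x = n - j.
  elim=> [_|j IH Hj]; first by exists 1%g; rewrite // cyc1 subn0.
  have [x xC Ex] := IH (ltnW Hj).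
  have [|t tC Et] := down x xC; first by rewrite Ex; lia.
  by exists t => //; move: Et; rewrite Ex; lia.
apply/eqP; rewrite eqn_leq; apply/andP; split.
  pose h := fun x : 'S_n => (inord (cyc x) : 'I_n.+1).
  have hinj : {in C &, injective h}.
    move=> x y xC yC /(congr1 val).
    have := cyc_leq x; have := cyc_leq y.
    move=> Hy Hx; rewrite /h /= !inordK ?ltnS // => Exy.
    by case: (Hch x y xC yC) => /le_rank [->//|]; rewrite Exy ltnn.
  rewrite -(card_in_imset hinj).
  have : h @: C \subset [set~ ord0].
    apply/subsetP => _ /imsetP [x _ ->]; rewrite !inE; apply/eqP => /(congr1 val).
    rewrite /h /= inordK ?ltnS ?cyc_leq //; have := cyc_gt0 k x => H E; by rewrite E in H.
  by move/subset_leq_card; rewrite cardsC1 card_ord.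
pose g := fun i : 'I_n => odflt 1%g [pick x in C | cyc x == n - i].
have gP : forall i : 'I_n, g i \in C /\ cyc (g i) = n - i.
  move=> i; rewrite /g; case: pickP => [x /andP [xC /eqP ->] //|H].
  have [x xC Ex] := ranks i (ltn_ord i).
  by move: (H x); rewrite xC Ex eqxx.
have ginj : injective g.
  move=> i j E; apply: ord_inj.
  have := gP i; have := gP j; rewrite E => -[_ ->] [_]; have := ltn_ord i; have := ltn_ord j; lia.
apply: (@leq_trans #|g @: [set: 'I_n]|); first by rewrite card_imset // cardsT card_ord.
apply: subset_leq_card; apply/subsetP => x /imsetP [i _ ->]; exact: (gP i).1.
Qed.
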